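(* (i) For any $N\in\mathbb{N}$ and $k\in\mathbb{Z}_+$, $$\gamma_N^{-(N-2),k}=2^k\Bigl(\frac N2+k-2\Bigr)_k(N+k-3)_k.$$ (ii) For any $k\in\mathbb{N}$, $\ell_2^k=2^{k-1}((k-1)!)^2$.
   Context: $|x|_N$ is the Euclidean norm on $\mathbb{R}^N$, $\log$ the natural logarithm, $I_N=\{1,\ldots,N\}$, $D_i=\partial_{x_{i_1}}\cdots\partial_{x_{i_k}}$ for $i=(i_1,\ldots,i_k)\in I_N^k$, and $|\nabla_N^k u(x)|_{N^k}=\bigl(\sum_{i\in I_N^k}(D_iu(x))^2\bigr)^{1/2}$ (for $k=0$ this is $|u(x)|$). It is known that for $k\in\mathbb{Z}_+$, $s\in\mathbb{R}$ the function $x\mapsto(|x|_N^{k-s}|\nabla_N^k[|x|_N^s]|_{N^k})^2$ is constant on $\mathbb{R}^N\setminus\{0\}$; its value is denoted $\gamma_N^{s,k}$. For $k\in\mathbb{N}$ the function $x\mapsto(|x|_N^{k}|\nabla_N^k[\log|x|_N]|_{N^k})^2$ is constant on $\mathbb{R}^N\setminus\{0\}$, with value $\ell_N^k$. $(\nu)_k=\prod_{j=0}^{k-1}(\nu-j)$ for $k\in\mathbb{N}$, $(\nu)_0=1$. *)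

(* Defs.v *)
From HB Require Import structures.
From mathcomp Require Import all_boot all_order all_algebra.
From mathcomp Require Import all_classical all_reals all_analysis.
Set Implicit Arguments. Unset Strict Implicit. Unset Printing Implicit Defensive.
Import Order.TTheory GRing.Theory Num.Theory.
Import numFieldNormedType.Exports.
Local Open Scope ring_scope.

Section Defs.
Variable R : realType.

Definition enorm (N : nat) (x : 'rV[R]_N) : R :=
  Num.sqrt (\sum_(j < N) (x ord0 j) ^+ 2).

Definition evec (N : nat) (j : 'I_N) : 'rV[R]_N := delta_mx ord0 j.

Definition pder (N : nat) (j : 'I_N) (u : 'rV[R]_N -> R) : 'rV[R]_N -> R :=
  fun x => 'D_(evec j) u x.

Definition Dmulti (N : nat) (i : seq 'I_N) (u : 'rV[R]_N -> R) : 'rV[R]_N -> R :=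
  foldr (@pder N) u i.

Definition gradk_sq (N k : nat) (u : 'rV[R]_N -> R) (x : 'rV[R]_N) : R :=
  \sum_(i : k.-tuple 'I_N) (Dmulti (tval i) u x) ^+ 2.

Definition gradk_norm (N k : nat) (u : 'rV[R]_N -> R) (x : 'rV[R]_N) : R :=
  Num.sqrt (gradk_sq k u x).

(* the function x |-> (|x|^(k-s) |nabla^k [|x|^s]|)^2, whose constant
   value on R^N \ {0} is gamma_N^{s,k} *)
Definition gamma_fun (N : nat) (s : R) (k : nat) (x : 'rV[R]_N) : R :=
  ((enorm x) `^ (k%:R - s) * gradk_norm k (fun y => (enorm y) `^ s) x) ^+ 2.

(* the function x |-> (|x|^k |nabla^k [log |x|]|)^2, whose constant value
   on R^N \ {0} is ell_N^k *)
Definition ell_fun (N : nat) (k : nat) (x : 'rV[R]_N) : R :=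
  ((enorm x) ^+ k * gradk_norm k (fun y => ln (enorm y)) x) ^+ 2.

Definition falling (nu : R) (k : nat) : R := \prod_(j < k) (nu - j%:R).

End Defs.

(* Main.v *)
Require Import Defs.
From HB Require Import structures.
From mathcomp Require Import all_boot all_order all_algebra.
From mathcomp Require Import all_classical all_reals all_analysis.
From mathcomp Require Import ring lra.
Import Order.TTheory GRing.Theory Num.Theory.
Import numFieldNormedType.Exports.
Local Open Scope ring_scope.
Local Open Scope classical_set_scope.
Set Implicit Arguments. Unset Strict Implicit.

Section S.
Variable R : realType.
Variable N : nat.
Local Notation V := 'rV[R]_N.

Lemma deriveP1 (f : V -> R) x v : 'D_v f x = 'D_1 (fun h : R => f (h *: v + x)) 0.
Proof.
rewrite /derive.
have E : (fun h : R => h^-1 *: ((f \o shift x) (h *: v) - f x)) =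
  (fun h : R => h^-1 *: (((fun h0 : R => f (h0 *: v + x)) \o shift 0) h%:A - f (0 *: v + x))).
  by rewrite funeqE => h /=; rewrite addr0 scale0r add0r [_%:A]mulr1.
by rewrite E.
Qed.

Lemma is_derive_1D (f : V -> R) x v df :
  is_derive (0:R) 1 (fun h : R => f (h *: v + x)) df -> is_derive x v f df.
Proof.
move=> [d e]; split; first exact/(derivable1P f x v).2.
by rewrite deriveP1.
Qed.

Lemma is_derive_comp1 (f : V -> R) (g : R -> R) x v df dg :
  is_derive x v f df -> is_derive (f x) 1 g dg -> is_derive x v (g \o f) (dg * df).
Proof.
move=> [fd fv] [gd gv].
set p := fun h : R => f (h *: v + x).
have p0 : p 0 = f x by rewrite /p scale0r add0r.
have pd : derivable p 0 1 by exact: (derivable1P f x v).1 fd.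
have gd' : derivable g (p 0) 1 by rewrite p0.
have cd : derivable (g \o p) 0 1.
  apply/derivable1_diffP; apply: differentiable_comp; exact/derivable1_diffP.
split.
  apply/(derivable1P _ x v); exact: cd.
rewrite deriveP1 /=.
have -> : (fun h : R => g (f (h *: v + x))) = g \o p by [].
rewrite -derive1E derive1_comp // !derive1E p0 gv -deriveP1 fv //.
Qed.

Lemma is_derive_coord (x v : V) i : is_derive x v (fun y : V => y ord0 i) (v ord0 i).
Proof.
apply: is_derive_1D.
have -> : (fun h : R => (h *: v + x) ord0 i) = (fun h => h * v ord0 i + x ord0 i).
  by rewrite funeqE => h; rewrite !mxE.
apply: is_derive_eq. by rewrite scaler0 add0r addr0 [_%:A]mulr1.
Qed.

Definition q (y : V) : R := \sum_(i < N) (y ord0 i) ^+ 2.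

Lemma evecE (j i : 'I_N) : (@evec R N j : V) ord0 i = (i == j)%:R.
Proof. by rewrite /evec mxE eqxx. Qed.

Lemma is_derive_q x j : is_derive x (@evec R N j) q (2 * x ord0 j).
Proof.
have -> : q = \sum_(i < N) ((fun y : V => y ord0 i) ^+ 2).
  by rewrite fct_sumE; rewrite funeqE => y; rewrite /q; apply: eq_bigr => i _; rewrite exprfctE.
have H : is_derive x (evec R j) (\sum_(i<N) ((fun y : V => y ord0 i) ^+ 2))
   (\sum_(i<N) ((2%:R * x ord0 i ^+ 1) *: (evec R j : V) ord0 i)).
  apply: is_derive_sum => i; exact: (is_deriveX 2 (is_derive_coord x (evec R j) i)).
suff <- : (\sum_(i<N) ((2%:R * x ord0 i ^+ 1) *: (evec R j : V) ord0 i)) = 2 * x ord0 j by [].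
rewrite (bigD1 j) //= big1 ?addr0; last first.
  by move=> i /negPf ij; rewrite /evec mxE ij andbF scaler0.
by rewrite /evec mxE !eqxx expr1 [_ *: _]mulr1.
Qed.

Lemma q_ge0 y : 0 <= q y.
Proof. by apply: sumr_ge0 => i _; exact: sqr_ge0. Qed.

Lemma q_gt0 (y : V) : y != 0 -> 0 < q y.
Proof.
move=> y0; rewrite lt_neqAle q_ge0 andbT; apply/negP => /eqP/esym.
move/eqP; rewrite psumr_eq0; last by move=> i _; exact: sqr_ge0.
move/allP => H; move/eqP: y0; apply; apply/rowP => i.
have := H i (mem_index_enum _); rewrite /= sqrf_eq0 => /eqP ->.
by rewrite mxE.
Qed.

Inductive expr : Type :=
| Cst of R | Crd of 'I_N | Pw of R | Ln | Add of expr & expr | Mul of expr & expr.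

Fixpoint ev (e : expr) (y : V) : R :=
  match e with
  | Cst c => c
  | Crd i => y ord0 i
  | Pw a => q y `^ a
  | Ln => ln (q y)
  | Add a b => ev a y + ev b y
  | Mul a b => ev a y * ev b y
  end.

Fixpoint d (j : 'I_N) (e : expr) : expr :=
  match e with
  | Cst _ => Cst 0
  | Crd i => Cst (i == j)%:R
  | Pw a => Mul (Cst (2 * a)) (Mul (Crd j) (Pw (a - 1)))
  | Ln => Mul (Cst 2) (Mul (Crd j) (Pw (-1)))
  | Add a b => Add (d j a) (d j b)
  | Mul a b => Add (Mul (d j a) b) (Mul a (d j b))
  end.

Lemma is_derive_val (f : V -> R) x v df df' : is_derive x v f df -> df = df' -> is_derive x v f df'.
Proof. by move=> ? <-. Qed.

Lemma sound (e : expr) (x : V) j : x != 0 -> is_derive x (@evec R N j) (ev e) (ev (d j e) x).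
Proof.
move=> x0; have qx := q_gt0 x0.
elim: e => [c|i|a||a IHa b IHb|a IHa b IHb] /=.
- have -> : (fun _ : V => c) = cst c by []. exact: is_derive_cst.
- have := is_derive_coord x (evec R j) i; rewrite /evec mxE eqxx /=; exact.
- change (is_derive x (evec R j) ((fun t : R => t `^ a) \o q) (2 * a * (x ord0 j * q x `^ (a - 1)))).
  have H := (is_derive_comp1 (is_derive_q x j) (is_derive1_powR a qx)).
  apply: (is_derive_val H).
  ring.
- change (is_derive x (evec R j) ((@ln R) \o q) (2 * (x ord0 j * q x `^ (-1)))).
  apply: (is_derive_val (is_derive_comp1 (is_derive_q x j) (is_derive1_ln qx))).
  rewrite /= powR_inv1 ?q_ge0 //; ring.
- have -> : (fun y => ev a y + ev b y) = ev a + ev b by [].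
  exact: is_deriveD.
- have -> : (fun y => ev a y * ev b y) = ev a * ev b by [].
  apply: is_derive_eq. rewrite -![_ *: _]/(_ * _). ring.
Qed.


Lemma near_neq0 (x : V) : x != 0 -> \forall y \near x, y != 0.
Proof.
move=> x0.
have : open [set y : V | y != 0].
  rewrite (_ : [set y | y != 0] = ~` [set 0]); last by apply/seteqP; split => y /=; move/eqP.
  apply: closed_openC. apply: accessible_closed_set1. apply: hausdorff_accessible. exact: norm_hausdorff.
move=> op; exact: (open_nbhs_nbhs (conj op x0)).
Qed.

Definition EqU (f g : V -> R) := forall y : V, y != 0 -> f y = g y.

Lemma pder_near (f g : V -> R) j x : x != 0 -> EqU f g -> pder j f x = pder j g x.
Proof.
move=> x0 fg; rewrite /pder; apply: near_eq_derive.
by near=> y; apply: fg; near: y; exact: near_neq0.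
Unshelve. all: by end_near.
Qed.

Lemma pder_ev e j x : x != 0 -> pder j (ev e) x = ev (d j e) x.
Proof. by move=> x0; rewrite /pder; have [_ ->] := sound e j x0. Qed.

Lemma dcong e1 e2 j : EqU (ev e1) (ev e2) -> EqU (ev (d j e1)) (ev (d j e2)).
Proof. by move=> H x x0; rewrite -!pder_ev //; exact: pder_near. Qed.

Definition dt (t : seq 'I_N) (e : expr) : expr := foldr d e t.

Lemma dtcong e1 e2 t : EqU (ev e1) (ev e2) -> EqU (ev (dt t e1)) (ev (dt t e2)).
Proof. by elim: t => [|j t IH] //= H; apply: dcong; exact: IH. Qed.

Lemma Dmulti_ev e t x : x != 0 -> Dmulti t (ev e) x = ev (dt t e) x.
Proof.
elim: t x => [|j t IH] x x0 //=.
rewrite -pder_ev //; apply: pder_near => // y y0; exact: IH.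
Qed.

Lemma dcomm e i j y : ev (d i (d j e)) y = ev (d j (d i e)) y.
Proof.
elim: e => [c|k|a||a IHa b IHb|a IHa b IHb] /=; try ring.
- rewrite eq_sym; ring.
- rewrite eq_sym; ring.
- by rewrite IHa IHb.
- rewrite IHa IHb; ring.
Qed.

Lemma dtcomm e t j : EqU (ev (d j (dt t e))) (ev (dt t (d j e))).
Proof.
elim: t => [|i t IH] //= y y0.
rewrite dcomm; exact: dcong.
Qed.

Definition Sum (l : seq expr) : expr := foldr Add (Cst 0) l.

Lemma ev_Sum l y : ev (Sum l) y = \sum_(e <- l) ev e y.
Proof. by elim: l => [|e l IH] /=; rewrite ?big_nil ?big_cons ?IH. Qed.

Lemma d_Sum l j : d j (Sum l) = Sum (map (d j) l).
Proof. by elim: l => [|e l IH] //=; rewrite IH. Qed.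

Lemma dt_Sum l t : dt t (Sum l) = Sum (map (dt t) l).
Proof.
elim: t l => [|j t IH] l /=; first by rewrite map_id.
by rewrite IH d_Sum -map_comp.
Qed.

Lemma dt_Cst0 t : EqU (ev (dt t (Cst 0))) (ev (Cst 0)).
Proof.
elim: t => [|j t IH] //= y y0.
by have := dcong j IH y0; rewrite /= => ->.
Qed.

Definition Harm e := EqU (fun y => \sum_(j < N) ev (d j (d j e)) y) (fun _ => 0).

Lemma harm_dt e t : Harm e -> Harm (dt t e).
Proof.
move=> H y y0.
have E : forall j, ev (d j (d j (dt t e))) y = ev (dt t (d j (d j e))) y.
  move=> j; rewrite (dcong j (@dtcomm e t j) y0).
  exact: (@dtcomm (d j e) t j y y0).
under eq_bigr => j _ do rewrite E.
have L : EqU (ev (Sum (map (fun j => d j (d j e)) (index_enum 'I_N)))) (ev (Cst 0)).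
  by move=> z z0; rewrite ev_Sum big_map; exact: H.
have := dtcong t L y0; rewrite dt_Sum ev_Sum !big_map => ->.
exact: dt_Cst0.
Qed.


Lemma tuple_split k (F : seq 'I_N -> R) :
  \sum_(t : k.+1.-tuple 'I_N) F (tval t) = \sum_(j < N) \sum_(t : k.-tuple 'I_N) F (j :: tval t).
Proof.
rewrite pair_big /=.
rewrite (reindex (fun p : 'I_N * k.-tuple 'I_N => cons_tuple p.1 p.2)) /=; last first.
  exists (fun t : k.+1.-tuple 'I_N => (thead t, behead_tuple t)).
    by move=> [j t] _ /=; rewrite theadE; congr pair; apply: val_inj.
  by move=> t _; rewrite [RHS](tuple_eta t) /=; apply: val_inj.
by apply: eq_bigr => -[j t] _.
Qed.


Definition G k e y := \sum_(t : k.-tuple 'I_N) (ev (dt (tval t) e) y) ^+ 2.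
Definition SumE k e := Sum (map (fun t : k.-tuple 'I_N => Mul (dt t e) (dt t e)) (index_enum _)).

Lemma ev_SumE k e y : ev (SumE k e) y = G k e y.
Proof. by rewrite ev_Sum big_map; apply: eq_bigr => t _; rewrite /= expr2. Qed.

Lemma G_step e k x : Harm e -> x != 0 ->
  G k.+1 e x = 2^-1 * \sum_(j < N) ev (d j (d j (SumE k e))) x.
Proof.
move=> H x0.
rewrite /G (tuple_split k (fun s => (ev (dt s e) x) ^+ 2)) /=.
have E : forall j, ev (d j (d j (SumE k e))) x =
   \sum_(t : k.-tuple 'I_N) (2 * (ev (d j (dt t e)) x) ^+ 2) +
   \sum_(t : k.-tuple 'I_N) (2 * (ev (dt t e) x * ev (d j (d j (dt t e))) x)).
  move=> j; rewrite /SumE !d_Sum -!map_comp ev_Sum big_map -big_split; apply: eq_bigr => t _ /=; ring.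
under [in RHS]eq_bigr => j _ do rewrite E.
rewrite big_split /=.
have Z : \sum_(j < N) \sum_(t : k.-tuple 'I_N) (2 * (ev (dt t e) x * ev (d j (d j (dt t e))) x)) = 0.
  rewrite exchange_big /=; apply: big1 => t _.
  rewrite -mulr_sumr -mulr_sumr.
  by have := harm_dt t H x0; rewrite /= => ->; rewrite !mulr0.
rewrite Z addr0 mulr_sumr; apply: eq_bigr => j _; rewrite mulr_sumr; apply: eq_bigr => t _.
by rewrite mulrA mulVf ?mul1r // pnatr_eq0.
Qed.



Lemma q_pow_shift x p : x != 0 -> q x * q x `^ (p - 1 - 1) = q x `^ (p - 1).
Proof.
move=> x0; have qx := q_gt0 x0.
rewrite -{1}(powRr1 (ltW qx)) -powRD; first by congr (_ `^ _); ring.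
by apply/implyP => _; rewrite gt_eqF.
Qed.

Lemma lap_pw c p x : x != 0 ->
  \sum_(j < N) ev (d j (d j (Mul (Cst c) (Pw p)))) x = c * (2 * p * (N%:R + 2 * p - 2)) * q x `^ (p - 1).
Proof.
move=> x0.
have E : forall j, ev (d j (d j (Mul (Cst c) (Pw p)))) x =
    c * (2 * p) * q x `^ (p - 1) + c * (2 * p) * (2 * (p - 1)) * q x `^ (p - 1 - 1) * (x ord0 j ^+ 2).
  by move=> j; rewrite /= eqxx mulr1n; ring.
under eq_bigr => j _ do rewrite E.
rewrite big_split /= sumr_const card_ord -mulr_sumr -/(q x).
rewrite -(q_pow_shift p x0).
rewrite -mulr_natr; ring.
Qed.

Lemma G_rec e k c p : Harm e -> EqU (G k e) (fun y => c * q y `^ p) ->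
  EqU (G k.+1 e) (fun y => c * (p * (N%:R + 2 * p - 2)) * q y `^ (p - 1)).
Proof.
move=> H HG x x0.
rewrite G_step //.
have E : EqU (ev (SumE k e)) (ev (Mul (Cst c) (Pw p))).
  by move=> y y0; rewrite ev_SumE HG.
under eq_bigr => j _ do rewrite (dcong j (dcong j E) x0).
rewrite lap_pw //=.
rewrite !mulrA; congr (_ * _).
by field.
Qed.


Lemma sum_tuple0 (F : 0.-tuple 'I_N -> R) : \sum_(t : 0.-tuple 'I_N) F t = F [tuple].
Proof.
rewrite (eq_bigl (pred1 [tuple])) ?big_pred1_eq // => t.
by rewrite [t]tuple0; apply/esym/eqP.
Qed.

Lemma G0 e y : G 0 e y = (ev e y) ^+ 2.
Proof. by rewrite /G sum_tuple0. Qed.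

Lemma G1 e y : G 1 e y = \sum_(j < N) (ev (d j e) y) ^+ 2.
Proof. by rewrite /G (tuple_split 0 (fun s => (ev (dt s e) y) ^+ 2)); apply: eq_bigr => j _; rewrite sum_tuple0. Qed.

Lemma gradk_G k e x : x != 0 -> gradk_sq k (ev e) x = G k e x.
Proof. by move=> x0; rewrite /gradk_sq /G; apply: eq_bigr => t _; rewrite Dmulti_ev. Qed.

Lemma G_ge0 k e x : 0 <= G k e x.
Proof. by apply: sumr_ge0 => t _; exact: sqr_ge0. Qed.

Lemma enorm_q (y : V) : enorm y = q y `^ (2^-1).
Proof. by rewrite powR12_sqrt ?q_ge0. Qed.

Lemma harm_pw p : N%:R + 2 * p - 2 = 0 -> Harm (Mul (Cst 1) (Pw p)).
Proof. by move=> H y y0; rewrite /= lap_pw // H !mulr0 mul0r. Qed.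

End S.

Definition falling' (R : realType) := @falling R.

Lemma fallingS (R : realType) (nu : R) k : falling nu k.+1 = nu * falling (nu - 1) k.
Proof.
rewrite /falling big_ord_recl /= subr0; congr (_ * _); apply: eq_bigr => i _.
rewrite /bump leq0n natrD mulr1n; ring.
Qed.

Section P1.
Variable R : realType.
Variable N : nat.
Local Notation V := 'rV[R]_N.

Definition cI (k : nat) : R := 2 ^+ k * falling (N%:R / 2 + k%:R - 2) k * falling (N%:R + k%:R - 3) k.
Definition sI : R := - (N%:R - 2).
Definition eI : expr R N := Mul (Cst _ 1) (Pw _ (sI / 2)).

Lemma partI k : EqU (G k eI) (fun y => cI k * q y `^ (sI - k%:R)).
Proof.
elim: k => [|k IH] y y0.
- rewrite G0 /= /cI /falling !big_ord0 expr0 !mulr1 mul1r subr0.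
  rewrite -powR_mulrn ?powR_ge0 // -powRrM mul1r; congr (_ `^ _); by field.
- have H : Harm eI by apply: harm_pw; rewrite /sI; by field.
  rewrite (G_rec H IH y0).
  have -> : sI - k%:R - 1 = sI - k.+1%:R by rewrite -natr1; ring.
  congr (_ * _).
  rewrite /cI !fallingS exprS.
  have -> : N%:R / 2 + k.+1%:R - 2 - 1 = N%:R / 2 + k%:R - 2 :> R by rewrite -natr1; ring.
  have -> : N%:R + k.+1%:R - 3 - 1 = N%:R + k%:R - 3 :> R by rewrite -natr1; ring.
  rewrite /sI -natr1; by field.
Qed.

End P1.

Section P2.
Variable R : realType.
Local Notation V := 'rV[R]_2.

Lemma q_pow1 (x : V) a : x != 0 -> q x * q x `^ (a - 1) = q x `^ a.
Proof.
move=> x0; have qx := q_gt0 x0.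
rewrite -{1}(powRr1 (ltW qx)) -powRD; first by congr (_ `^ _); ring.
by apply/implyP => _; rewrite gt_eqF.
Qed.

Definition eL : expr R 2 := Mul (Cst _ 2^-1) (Ln _ _).
Definition cL (k : nat) : R := 2 ^+ k.-1 * (k.-1`!)%:R ^+ 2.

Lemma harm_ln : Harm eL.
Proof.
move=> x x0.
have E : forall j, ev (d j (d j eL)) x =
    q x `^ (-1) - 2 * q x `^ (-1 - 1) * (x ord0 j ^+ 2).
  by move=> j; rewrite /= eqxx mulr1n; field.
under eq_bigr => j _ do rewrite E.
rewrite big_split /= sumr_const card_ord sumrN -mulr_sumr -/(q x).
rewrite -mulrA [_ `^ _ * q x]mulrC q_pow1 //.
by rewrite -mulr_natr; ring.
Qed.

Lemma partL n : EqU (G n.+1 eL) (fun y => cL n.+1 * q y `^ (- n.+1%:R)).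
Proof.
elim: n => [|n IH] y y0.
- have qy := q_gt0 y0.
  have E : forall j, ev (d j eL) y ^+ 2 = (q y)^-2 * (y ord0 j ^+ 2).
    by move=> j; rewrite /= powR_inv1 ?q_ge0 //; field; rewrite gt_eqF.
  rewrite G1.
  under eq_bigr => j _ do rewrite E.
  rewrite -mulr_sumr -/(q y) /cL /= expr0 fact0 mul1r expr1n powR_inv1 ?q_ge0 //.
  field; by rewrite gt_eqF.
- rewrite (G_rec harm_ln IH y0).
  have -> : - n.+1%:R - 1 = - n.+2%:R :> R by rewrite -(@natr1 R n.+1); ring.
  congr (_ * _).
  rewrite /cL /= factS natrM [2 ^+ n.+1]exprS ?expr1 -[n.+1%:R]natr1; ring.
Qed.

End P2.

Theorem theorem1p3 (R : realType) :
  (forall (N k : nat), (0 < N)%N ->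
     forall x : 'rV[R]_N, x != 0 ->
       gamma_fun (- (N%:R - 2)) k x =
         2 ^+ k * falling (N%:R / 2 + k%:R - 2) k * falling (N%:R + k%:R - 3) k)
  /\
  (forall k : nat, (0 < k)%N ->
     forall x : 'rV[R]_2, x != 0 ->
       ell_fun k x = 2 ^+ k.-1 * ((k.-1)`!)%:R ^+ 2).
Proof.
split.
- move=> N k _ x x0.
  have qx := q_gt0 x0.
  rewrite /gamma_fun /gradk_norm.
  have -> : (fun y : 'rV[R]_N => enorm y `^ (- (N%:R - 2))) = ev (eI R N).
    rewrite funeqE => y; rewrite /= mul1r enorm_q -powRrM /sI; congr (_ `^ _).
    by rewrite mulrC.
  rewrite gradk_G // exprMn sqr_sqrtr ?G_ge0 // (partI k x0) -/(cI R N k).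
  rewrite enorm_q -powRrM -powR_mulrn ?powR_ge0 // -powRrM mulrCA -powRD.
    have -> : 2^-1 * (k%:R - - (N%:R - 2)) * 2%:R + (sI R N - k%:R) = 0 :> R.
      by rewrite /sI; field.
    by rewrite powRr0 mulr1.
  by apply/implyP => _; rewrite gt_eqF.
- move=> [//|n] _ x x0.
  have qx := q_gt0 x0.
  rewrite /ell_fun /gradk_norm.
  have -> : (fun y : 'rV[R]_2 => ln (enorm y)) = ev (eL R).
    by rewrite funeqE => y; rewrite /= enorm_q ln_powR.
  rewrite gradk_G // exprMn sqr_sqrtr ?G_ge0 // (partL n x0).
  rewrite exprAC /enorm sqr_sqrtr ?q_ge0 // -/(q x) powR_invn ?q_ge0 //.
  rewrite mulrCA mulfV ?mulr1 //; last by rewrite expf_neq0 // gt_eqF.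
Qed.
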